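(* Let $D\subset\mathbb{R}^2$ be a domain, $v\colon D\to\mathbb{R}^2$ a diffeomorphism onto its image, and let $A\colon[0,\infty)\to\mathbb{SL}(2)$ be a geodesic of $\mathbb{SL}(2)$, where $\mathbb{SL}(2)\subset\mathbb{R}^{2\times2}\cong\mathbb{R}^4$ carries the Riemannian metric induced by the Euclidean metric of $\mathbb{R}^4$. Then $\varphi(t,\alpha)=A(t)v(\alpha)$ is a solution of the Lagrangian incompressible Euler problem on $D$.
   Context: $\mathbb{SL}(2)$ is the group of real $2\times2$ matrices of determinant $1$, a $3$-dimensional submanifold of $\mathbb{R}^{2\times 2}\cong\mathbb{R}^4$. For $\varphi(t,\alpha)=\varphi^t(\alpha)$, primes denote $t$-derivatives and $d\varphi^t$ the Jacobian in $\alpha$. ''Solution of the Lagrangian incompressible Euler problem on $D$'' means: each $\varphi^t$ is a diffeomorphism of $D$ onto its image, $\det(d\varphi^t)=\det(d\varphi^0)\ne0$ for all $t\ge0$, and there is a scalar function $p(t,\alpha)$ with $(d\varphi^t)^T\varphi''+\nabla_\alpha p=0$. *)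

(* Defs.v *)
From Stdlib Require Import Reals.
Open Scope R_scope.

Definition R2 : Type := (R * R)%type.

Record M2 : Type := mkM2 { a11 : R; a12 : R; a21 : R; a22 : R }.

Definition det (m : M2) : R := a11 m * a22 m - a12 m * a21 m.

Definition mulv (m : M2) (x : R2) : R2 :=
  (a11 m * fst x + a12 m * snd x, a21 m * fst x + a22 m * snd x).

Definition frob (m n : M2) : R :=
  a11 m * a11 n + a12 m * a12 n + a21 m * a21 n + a22 m * a22 n.

Definition InSL2 (m : M2) : Prop := det m = 1.

(** differential of det at A applied to X; the tangent space of the regular
    level set SL(2) at A is its kernel *)
Definition ddet (A X : M2) : R :=
  a11 A * a22 X + a11 X * a22 A - a12 A * a21 X - a12 X * a21 A.
Definition TangentSL2 (A X : M2) : Prop := ddet A X = 0.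

(** derivative of f : R -> R at t relative to an interval I
    (one-sided at endpoints of I) *)
Definition deriv_on (I : R -> Prop) (f : R -> R) (t l : R) : Prop :=
  limit1_in (fun h => (f (t + h) - f t) / h) (fun h => h <> 0 /\ I (t + h)) l 0.

Definition Ihalf (t : R) : Prop := 0 <= t.

Definition derivM (I : R -> Prop) (A : R -> M2) (t : R) (B : M2) : Prop :=
  deriv_on I (fun s => a11 (A s)) t (a11 B) /\
  deriv_on I (fun s => a12 (A s)) t (a12 B) /\
  deriv_on I (fun s => a21 (A s)) t (a21 B) /\
  deriv_on I (fun s => a22 (A s)) t (a22 B).

(** Geodesic of SL(2) (induced metric from R^4) on [0,oo):
    a C^2 curve in SL(2) whose acceleration is normal to SL(2). *)
Definition geodesic_SL2 (A : R -> M2) : Prop :=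
  (forall t, 0 <= t -> InSL2 (A t)) /\
  exists A1 A2 : R -> M2,
    forall t, 0 <= t ->
      derivM Ihalf A t (A1 t) /\ derivM Ihalf A1 t (A2 t) /\
      (forall X, TangentSL2 (A t) X -> frob (A2 t) X = 0).

Definition dist2sq (x y : R2) : R := (fst x - fst y)^2 + (snd x - snd y)^2.

Definition is_open (U : R2 -> Prop) : Prop :=
  forall x, U x -> exists r, 0 < r /\ forall y, dist2sq x y < r^2 -> U y.

Definition is_connected (U : R2 -> Prop) : Prop :=
  forall P Q : R2 -> Prop, is_open P -> is_open Q ->
    (forall x, U x -> P x \/ Q x) ->
    (forall x, U x -> P x -> Q x -> False) ->
    (exists x, U x /\ P x) -> (exists x, U x /\ Q x) -> False.

Definition domain (D : R2 -> Prop) : Prop :=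
  (exists x, D x) /\ is_open D /\ is_connected D.

Definition partial1 (f : R2 -> R) (x : R2) (l : R) : Prop :=
  derivable_pt_lim (fun s => f (s, snd x)) (fst x) l.
Definition partial2 (f : R2 -> R) (x : R2) (l : R) : Prop :=
  derivable_pt_lim (fun s => f (fst x, s)) (snd x) l.

Definition cont_on (U : R2 -> Prop) (f : R2 -> R) : Prop :=
  forall x, U x -> forall eps, 0 < eps -> exists delta, 0 < delta /\
    forall y, U y -> dist2sq x y < delta^2 -> Rabs (f y - f x) < eps.

Fixpoint Ck (n : nat) (U : R2 -> Prop) (f : R2 -> R) : Prop :=
  match n with
  | O => cont_on U f
  | S m => exists g1 g2 : R2 -> R,
      (forall x, U x -> partial1 f x (g1 x) /\ partial2 f x (g2 x)) /\
      Ck m U g1 /\ Ck m U g2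
  end.

Definition smooth (U : R2 -> Prop) (f : R2 -> R) : Prop := forall n, Ck n U f.

Definition smooth2 (U : R2 -> Prop) (f : R2 -> R2) : Prop :=
  smooth U (fun x => fst (f x)) /\ smooth U (fun x => snd (f x)).

Definition image (U : R2 -> Prop) (f : R2 -> R2) (y : R2) : Prop :=
  exists x, U x /\ f x = y.

Definition diffeo_onto_image (U : R2 -> Prop) (f : R2 -> R2) : Prop :=
  smooth2 U f /\
  (forall x y, U x -> U y -> f x = f y -> x = y) /\
  is_open (image U f) /\
  exists g : R2 -> R2, smooth2 (image U f) g /\
    (forall x, U x -> g (f x) = x) /\
    (forall y, image U f y -> f (g y) = y).

Definition jac (f : R2 -> R2) (x : R2) (J : M2) : Prop :=
  partial1 (fun y => fst (f y)) x (a11 J) /\ partial2 (fun y => fst (f y)) x (a12 J) /\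
  partial1 (fun y => snd (f y)) x (a21 J) /\ partial2 (fun y => snd (f y)) x (a22 J).

Definition lagrangian_euler (D : R2 -> Prop) (phi : R -> R2 -> R2) : Prop :=
  (forall t, 0 <= t -> diffeo_onto_image D (phi t)) /\
  (forall t alpha, 0 <= t -> D alpha ->
     exists Jt J0, jac (phi t) alpha Jt /\ jac (phi 0) alpha J0 /\
       det Jt = det J0 /\ det J0 <> 0) /\
  exists (p : R -> R2 -> R) (V W : R -> R2 -> R2),
    forall t alpha, 0 <= t -> D alpha ->
      deriv_on Ihalf (fun s => fst (phi s alpha)) t (fst (V t alpha)) /\
      deriv_on Ihalf (fun s => snd (phi s alpha)) t (snd (V t alpha)) /\
      deriv_on Ihalf (fun s => fst (V s alpha)) t (fst (W t alpha)) /\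
      deriv_on Ihalf (fun s => snd (V s alpha)) t (snd (W t alpha)) /\
      exists (J : M2) (g1 g2 : R),
        jac (phi t) alpha J /\ partial1 (p t) alpha g1 /\ partial2 (p t) alpha g2 /\
        (* ((d phi^t)^T phi'')_j + (grad_alpha p)_j = 0, j = 1, 2 *)
        a11 J * fst (W t alpha) + a21 J * snd (W t alpha) + g1 = 0 /\
        a12 J * fst (W t alpha) + a22 J * snd (W t alpha) + g2 = 0.

(* Main.v *)
From Pilot Require Import Defs.
From Stdlib Require Import Reals Lra Psatz FunctionalExtensionality.
From Coquelicot Require Import Coquelicot.
Import Pilot.Defs.
Open Scope R_scope.

Lemma dpl_lin (f g : R -> R) x lf lg a b :
  derivable_pt_lim f x lf -> derivable_pt_lim g x lg ->
  derivable_pt_lim (fun s => a * f s + b * g s) x (a*lf + b*lg).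
Proof.
  intros Hf Hg.
  apply (derivable_pt_lim_plus (fun s => a * f s) (fun s => b * g s)).
  - apply (derivable_pt_lim_scal f a x lf Hf).
  - apply (derivable_pt_lim_scal g b x lg Hg).
Qed.

Lemma deriv_on_lin I (f g : R -> R) t lf lg a b :
  deriv_on I f t lf -> deriv_on I g t lg ->
  deriv_on I (fun s => a * f s + b * g s) t (a*lf + b*lg).
Proof.
  unfold deriv_on; intros Hf Hg.
  replace (fun h => (a * f (t + h) + b * g (t + h) - (a * f t + b * g t)) / h)
    with (fun h => (fun _ => a) h * ((f (t + h) - f t) / h) + (fun _ => b) h * ((g (t + h) - g t) / h)).
  2:{ apply functional_extensionality; intro h; unfold Rdiv; ring. }
  apply limit_plus; apply limit_mul; try assumption;
  apply (limit_free (fun x => x)).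
Qed.

Definition ctat (U : R2 -> Prop) (g : R2 -> R) (x : R2) : Prop :=
  forall eps, 0 < eps -> exists delta, 0 < delta /\
    forall y, U y -> dist2sq x y < delta^2 -> Rabs (g y - g x) < eps.

Lemma C1_diff U f g1 g2 x : is_open U -> U x ->
  (forall z, U z -> partial1 f z (g1 z) /\ partial2 f z (g2 z)) ->
  ctat U g1 x ->
  differentiable_pt_lim (fun u v => f (u,v)) (fst x) (snd x) (g1 x) (g2 x).
Proof.
  intros HU Hx Hp Hc.
  destruct x as [x y]; simpl.
  intros [eps Heps]; simpl.
  destruct (HU _ Hx) as [r [Hr Hr']].
  destruct (Hc (eps/2)) as [d1 [Hd1 Hd1']]; [lra|].
  destruct (Hp _ Hx) as [_ H2].
  destruct (H2 (eps/2)) as [d2 Hd2]; [lra|].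
  assert (Hd : 0 < Rmin (r/2) (Rmin (d1/2) d2)).
  { destruct d2 as [d2 Hd2p]; simpl.
    apply Rmin_pos; [lra| apply Rmin_pos; lra]. }
  exists (mkposreal _ Hd); intros u v Hu Hv; simpl in Hu, Hv.
  pose proof (Rmin_l (r/2) (Rmin (d1/2) d2)) as m1.
  pose proof (Rmin_r (r/2) (Rmin (d1/2) d2)) as m2.
  pose proof (Rmin_l (d1/2) d2) as m3.
  pose proof (Rmin_r (d1/2) d2) as m4.
  set (d := Rmin (r/2) (Rmin (d1/2) d2)) in *.
  destruct (Rabs_def2 _ _ Hu) as [Hu1 Hu2].
  assert (S2 : Rabs (f (x,v) - f (x,y) - g2 (x,y) * (v - y)) <= eps/2 * Rabs (v - y)).
  { destruct (Req_dec v y) as [E|E].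
    - subst. replace (f (x,y) - f (x,y) - g2 (x,y) * (y - y)) with 0 by ring.
      rewrite Rabs_R0, Rminus_diag, Rabs_R0; lra.
    - assert (Hh : v - y <> 0) by lra.
      assert (Hh2 : Rabs (v - y) < d2) by lra.
      specialize (Hd2 (v - y) Hh Hh2). simpl in Hd2.
      replace (y + (v - y)) with v in Hd2 by ring.
      replace (f (x,v) - f (x,y) - g2 (x,y) * (v - y)) with
        (((f (x,v) - f (x,y)) / (v - y) - g2 (x,y)) * (v - y)) by (field; auto).
      rewrite Rabs_mult.
      apply Rmult_le_compat_r; [apply Rabs_pos| lra]. }
  assert (Inball : forall c, Rabs (c - x) < d -> U (c, v) /\ dist2sq (x,y) (c,v) < d1^2).
  { intros c Hc'. unfold dist2sq; simpl.
    assert (A1 : (x - c)^2 < d^2).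
    { rewrite <- (Rsqr_pow2 (x-c)), <- Rsqr_pow2. apply Rsqr_lt_abs_1.
      rewrite (Rabs_pos_eq d) by lra. rewrite Rabs_minus_sym; lra. }
    assert (A2 : (y - v)^2 < d^2).
    { rewrite <- (Rsqr_pow2 (y-v)), <- Rsqr_pow2. apply Rsqr_lt_abs_1.
      rewrite (Rabs_pos_eq d) by lra. rewrite Rabs_minus_sym; lra. }
    split.
    - apply Hr'. unfold dist2sq; simpl. nra.
    - nra. }
  assert (S1 : Rabs (f (u,v) - f (x,v) - g1 (x,y) * (u - x)) <= eps/2 * Rabs (u - x)).
  { assert (Hder : forall c, Rabs (c - x) < d -> derivable_pt_lim (fun s => f (s, v)) c (g1 (c, v))).
    { intros c Hc'. destruct (Inball c Hc') as [HU' _].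
      exact (proj1 (Hp _ HU')). }
    assert (Hcl : forall c, Rabs (c - x) < d -> Rabs (g1 (c,v) - g1 (x,y)) < eps/2).
    { intros c Hc'. destruct (Inball c Hc') as [HU' Hdi]. apply Hd1'; auto. }
    destruct (Rtotal_order x u) as [Lt|[Eq|Gt]].
    - destruct (MVT_cor2 (fun s => f (s,v)) (fun s => g1 (s,v)) x u Lt) as [c [Ec Hc']].
      { intros c Hc'. apply Hder. apply Rabs_def1; lra. }
      simpl in Ec. rewrite Ec.
      replace (g1 (c, v) * (u - x) - g1 (x, y) * (u - x)) with ((g1 (c,v) - g1 (x,y)) * (u - x)) by ring.
      rewrite Rabs_mult. apply Rmult_le_compat_r; [apply Rabs_pos|].
      apply Rlt_le, Hcl. apply Rabs_def1; lra.
    - subst. replace (f (u,v) - f (u,v) - g1 (u,y) * (u - u)) with 0 by ring.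
      rewrite Rabs_R0, Rminus_diag, Rabs_R0; lra.
    - destruct (MVT_cor2 (fun s => f (s,v)) (fun s => g1 (s,v)) u x Gt) as [c [Ec Hc']].
      { intros c Hc'. apply Hder. apply Rabs_def1; lra. }
      simpl in Ec.
      assert (E : f (u,v) = f (x,v) - g1 (c,v) * (x - u)) by lra.
      replace (f (u, v) - f (x, v) - g1 (x, y) * (u - x)) with ((g1 (c,v) - g1 (x,y)) * (u - x)) by (rewrite E; ring).
      rewrite Rabs_mult. apply Rmult_le_compat_r; [apply Rabs_pos|].
      apply Rlt_le, Hcl. apply Rabs_def1; lra. }
  replace (f (u, v) - f (x, y) - (g1 (x, y) * (u - x) + g2 (x, y) * (v - y))) with
    ((f (u,v) - f (x,v) - g1 (x,y) * (u - x)) + (f (x,v) - f (x,y) - g2 (x,y) * (v - y))) by ring.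
  eapply Rle_trans; [apply Rabs_triang|].
  pose proof (Rmax_l (Rabs (u - x)) (Rabs (v - y))).
  pose proof (Rmax_r (Rabs (u - x)) (Rabs (v - y))).
  nra.
Qed.
Lemma cont_on_lin U f g a b : cont_on U f -> cont_on U g ->
  cont_on U (fun x => a * f x + b * g x).
Proof.
  intros Hf Hg x Hx eps Heps.
  set (e1 := eps / (2 * (Rabs a + 1))).
  set (e2 := eps / (2 * (Rabs b + 1))).
  pose proof (Rabs_pos a); pose proof (Rabs_pos b).
  assert (E1 : e1 * (2 * (Rabs a + 1)) = eps) by (unfold e1; field; lra).
  assert (E2 : e2 * (2 * (Rabs b + 1)) = eps) by (unfold e2; field; lra).
  assert (P1 : 0 < e1) by (unfold e1; apply Rdiv_lt_0_compat; lra).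
  assert (P2 : 0 < e2) by (unfold e2; apply Rdiv_lt_0_compat; lra).
  destruct (Hf x Hx e1 P1) as [d1 [Hd1 H1]].
  destruct (Hg x Hx e2 P2) as [d2 [Hd2 H2]].
  exists (Rmin d1 d2); split; [apply Rmin_pos; auto|].
  intros y Hy Hd.
  pose proof (Rmin_l d1 d2); pose proof (Rmin_r d1 d2).
  assert (0 < Rmin d1 d2) by (apply Rmin_pos; auto).
  specialize (H1 y Hy ltac:(nra)). specialize (H2 y Hy ltac:(nra)).
  replace (a * f y + b * g y - (a * f x + b * g x)) with (a * (f y - f x) + b * (g y - g x)) by ring.
  eapply Rle_lt_trans; [apply Rabs_triang|]. rewrite !Rabs_mult.
  pose proof (Rabs_pos (f y - f x)); pose proof (Rabs_pos (g y - g x)).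
  nra.
Qed.

Lemma Ck_lin U : forall n f g a b, Ck n U f -> Ck n U g ->
  Ck n U (fun x => a * f x + b * g x).
Proof.
  induction n; intros f g a b Hf Hg; simpl in *.
  - apply cont_on_lin; auto.
  - destruct Hf as [f1 [f2 [Hfp [Hf1 Hf2]]]].
    destruct Hg as [h1 [h2 [Hgp [Hh1 Hh2]]]].
    exists (fun x => a * f1 x + b * h1 x), (fun x => a * f2 x + b * h2 x).
    split; [|split; apply IHn; auto].
    intros x Hx. destruct (Hfp x Hx) as [A1 A2]; destruct (Hgp x Hx) as [B1 B2].
    split; unfold partial1, partial2 in *; apply dpl_lin; auto.
Qed.

Lemma sq_lt_abs (a d : R) : 0 < d -> a^2 < d^2 -> Rabs a < d.
Proof.
  intros Hd H. rewrite <- (Rsqr_pow2 a), <- Rsqr_pow2 in H.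
  apply Rsqr_lt_abs_0 in H. rewrite (Rabs_pos_eq d) in H by lra. exact H.
Qed.

Lemma diff_ctat U f x lx ly :
  differentiable_pt_lim (fun u v => f (u,v)) (fst x) (snd x) lx ly ->
  ctat U f x.
Proof.
  intros Hd eps Heps.
  assert (Hc : continuity_2d_pt (fun u v => f (u,v)) (fst x) (snd x)).
  { apply differentiable_continuity_pt. exists lx, ly; exact Hd. }
  destruct (Hc (mkposreal eps Heps)) as [[d Hdp] Hdd]; simpl in Hdd.
  exists d; split; auto.
  intros [y1 y2] _ Hy. destruct x as [x1 x2]. unfold dist2sq in Hy; simpl in *.
  apply Hdd.
  - rewrite Rabs_minus_sym. apply sq_lt_abs; [exact Hdp| idtac]. pose proof (pow2_ge_0 (x1-y1)); pose proof (pow2_ge_0 (x2-y2)); lra.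
  - rewrite Rabs_minus_sym. apply sq_lt_abs; [exact Hdp| idtac]. pose proof (pow2_ge_0 (x1-y1)); pose proof (pow2_ge_0 (x2-y2)); lra.
Qed.

Lemma Ck_cont U : is_open U -> forall n f, Ck n U f -> cont_on U f.
Proof.
  intros HU; induction n; intros f Hf; simpl in Hf; auto.
  destruct Hf as [g1 [g2 [Hp [Hg1 Hg2]]]].
  intros x Hx.
  apply (diff_ctat U f x (g1 x) (g2 x)).
  apply (C1_diff U f g1 g2 x HU Hx Hp).
  exact (IHn g1 Hg1 x Hx).
Qed.

Definition minv (m : M2) : M2 := mkM2 (a22 m) (- a12 m) (- a21 m) (a11 m).

Lemma mulv_minv m y : det m = 1 -> mulv m (mulv (minv m) y) = y.
Proof.
  intros H; unfold det in H; destruct y as [y1 y2]; unfold mulv, minv; simpl.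
  f_equal.
  - replace (a11 m * (a22 m * y1 + - a12 m * y2) + a12 m * (- a21 m * y1 + a11 m * y2))
      with ((a11 m * a22 m - a12 m * a21 m) * y1) by ring. rewrite H; ring.
  - replace (a21 m * (a22 m * y1 + - a12 m * y2) + a22 m * (- a21 m * y1 + a11 m * y2))
      with ((a11 m * a22 m - a12 m * a21 m) * y2) by ring. rewrite H; ring.
Qed.

Lemma minv_mulv m y : det m = 1 -> mulv (minv m) (mulv m y) = y.
Proof.
  intros H; unfold det in H; destruct y as [y1 y2]; unfold mulv, minv; simpl.
  f_equal.
  - replace (a22 m * (a11 m * y1 + a12 m * y2) + - a12 m * (a21 m * y1 + a22 m * y2))
      with ((a11 m * a22 m - a12 m * a21 m) * y1) by ring. rewrite H; ring.
  - replace (- a21 m * (a11 m * y1 + a12 m * y2) + a11 m * (a21 m * y1 + a22 m * y2))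
      with ((a11 m * a22 m - a12 m * a21 m) * y2) by ring. rewrite H; ring.
Qed.

Lemma det_minv m : det (minv m) = det m.
Proof. unfold det, minv; simpl; ring. Qed.

Lemma lin_dist m z w : dist2sq (mulv m z) (mulv m w) <= frob m m * dist2sq z w.
Proof.
  destruct z as [z1 z2], w as [w1 w2]; unfold dist2sq, mulv, frob; simpl.
  set (h := z1 - w1); set (k := z2 - w2).
  replace (a11 m * z1 + a12 m * z2 - (a11 m * w1 + a12 m * w2)) with (a11 m * h + a12 m * k) by (unfold h, k; ring).
  replace (a21 m * z1 + a22 m * z2 - (a21 m * w1 + a22 m * w2)) with (a21 m * h + a22 m * k) by (unfold h, k; ring).
  assert (E : (a11 m * a11 m + a12 m * a12 m + a21 m * a21 m + a22 m * a22 m) * (h ^ 2 + k ^ 2)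
     - ((a11 m * h + a12 m * k) ^ 2 + (a21 m * h + a22 m * k) ^ 2)
     = (a11 m * k - a12 m * h)^2 + (a21 m * k - a22 m * h)^2) by ring.
  pose proof (pow2_ge_0 (a11 m * k - a12 m * h)); pose proof (pow2_ge_0 (a21 m * k - a22 m * h)).
  lra.
Qed.

Lemma frob_nonneg m : 0 <= frob m m.
Proof. unfold frob. pose proof (Rle_0_sqr (a11 m)); pose proof (Rle_0_sqr (a12 m)); pose proof (Rle_0_sqr (a21 m)); pose proof (Rle_0_sqr (a22 m)); unfold Rsqr in *; lra. Qed.

Lemma lin_radius m d : 0 < d -> exists d', 0 < d' /\
  forall z w, dist2sq z w < d'^2 -> dist2sq (mulv m z) (mulv m w) < d^2.
Proof.
  intros Hd. pose proof (frob_nonneg m) as HK. set (K := frob m m) in *.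
  exists (d / (1 + K)). split.
  - apply Rdiv_lt_0_compat; lra.
  - intros z w H. pose proof (lin_dist m z w) as L. fold K in L.
    set (d' := d / (1 + K)) in *.
    assert (Ed : d' * (1 + K) = d) by (unfold d'; field; lra).
    assert (Pd : 0 < d') by (unfold d'; apply Rdiv_lt_0_compat; lra).
    assert (0 <= dist2sq z w) by (unfold dist2sq; pose proof (pow2_ge_0 (fst z - fst w)); pose proof (pow2_ge_0 (snd z - snd w)); lra).
    assert (K * dist2sq z w <= K * d'^2) by (apply Rmult_le_compat_l; lra).
    assert (K * d'^2 < (1+K) * d'^2) by nra.
    assert ((1+K) * d'^2 <= d^2) by (rewrite <- Ed; nra).
    lra.
Qed.
Lemma dpl_aff1 a b x : derivable_pt_lim (fun s => a * s + b) x a.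
Proof.
  apply is_derive_Reals. auto_derive; auto; ring.
Qed.

Lemma dpl_aff2 a b x : derivable_pt_lim (fun s => b + a * s) x a.
Proof.
  apply is_derive_Reals. auto_derive; auto; ring.
Qed.

Lemma Ck_comp U U' m : is_open U -> (forall z, U' z -> U (mulv m z)) ->
  forall n F, Ck n U F -> Ck n U' (fun z => F (mulv m z)).
Proof.
  intros HU HM; induction n; intros F HF; simpl in HF |- *.
  - intros z Hz eps Heps.
    destruct (HF _ (HM z Hz) eps Heps) as [d [Hd Hd']].
    destruct (lin_radius m d Hd) as [d' [Hd1 Hd2]].
    exists d'; split; [exact Hd1|].
    intros w Hw Hzw. apply Hd'; auto.
  - destruct HF as [g1 [g2 [Hp [Hg1 Hg2]]]].
    exists (fun z => a11 m * g1 (mulv m z) + a21 m * g2 (mulv m z)),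
           (fun z => a12 m * g1 (mulv m z) + a22 m * g2 (mulv m z)).
    split; [| split; apply Ck_lin; apply IHn; auto].
    intros z Hz.
    assert (Hd := C1_diff U F g1 g2 (mulv m z) HU (HM z Hz) Hp
                   (Ck_cont U HU n g1 Hg1 (mulv m z) (HM z Hz))).
    destruct z as [z1 z2]. simpl in Hd.
    split; unfold partial1, partial2; simpl.
    + pose proof (derivable_pt_lim_comp_2d (fun u v => F (u,v))
        (fun s => a11 m * s + a12 m * z2) (fun s => a21 m * s + a22 m * z2) z1
        _ _ (a11 m) (a21 m) Hd) as Hc.
      replace (a11 m * g1 (mulv m (z1, z2)) + a21 m * g2 (mulv m (z1, z2)))
        with (g1 (mulv m (z1, z2)) * a11 m + g2 (mulv m (z1, z2)) * a21 m) by ring.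
      apply Hc.
      * apply dpl_aff1.
      * apply dpl_aff1.
    + pose proof (derivable_pt_lim_comp_2d (fun u v => F (u,v))
        (fun s => a11 m * z1 + a12 m * s) (fun s => a21 m * z1 + a22 m * s) z2
        _ _ (a12 m) (a22 m) Hd) as Hc.
      replace (a12 m * g1 (mulv m (z1, z2)) + a22 m * g2 (mulv m (z1, z2)))
        with (g1 (mulv m (z1, z2)) * a12 m + g2 (mulv m (z1, z2)) * a22 m) by ring.
      apply Hc.
      * apply dpl_aff2.
      * apply dpl_aff2.
Qed.
Lemma open_image_lin D v m : det m = 1 -> is_open (image D v) ->
  is_open (image D (fun x => mulv m (v x))).
Proof.
  intros Hm Ho y [x [Dx Ey]]. subst y.
  destruct (Ho (v x) (ex_intro _ x (conj Dx eq_refl))) as [r [Hr Hr']].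
  destruct (lin_radius (minv m) r Hr) as [d [Hd Hd']].
  exists d; split; auto.
  intros w Hw. specialize (Hd' _ _ Hw). rewrite minv_mulv in Hd' by auto.
  destruct (Hr' _ Hd') as [x' [Dx' Ex']].
  exists x'; split; auto. rewrite Ex'. apply mulv_minv; auto.
Qed.

Lemma diffeo_lin D v m : det m = 1 -> diffeo_onto_image D v ->
  diffeo_onto_image D (fun x => mulv m (v x)).
Proof.
  intros Hm [[Hs1 Hs2] [Hinj [Ho [g [[Hg1 Hg2] [Hgv Hvg]]]]]].
  split; [|split; [|split]].
  - split; intro n.
    + exact (Ck_lin D n (fun x => fst (v x)) (fun x => snd (v x)) (a11 m) (a12 m) (Hs1 n) (Hs2 n)).
    + exact (Ck_lin D n (fun x => fst (v x)) (fun x => snd (v x)) (a21 m) (a22 m) (Hs1 n) (Hs2 n)).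
  - intros x y Dx Dy E. apply Hinj; auto.
    rewrite <- (minv_mulv m (v x)), <- (minv_mulv m (v y)) by auto. rewrite E; auto.
  - apply open_image_lin; auto.
  - assert (HM : forall z, image D (fun x => mulv m (v x)) z -> image D v (mulv (minv m) z)).
    { intros z [x [Dx Ez]]. subst z. exists x; split; auto. rewrite minv_mulv; auto. }
    exists (fun y => g (mulv (minv m) y)).
    split; [split|split].
    + intro n. exact (Ck_comp (image D v) _ (minv m) Ho HM n (fun z => fst (g z)) (Hg1 n)).
    + intro n. exact (Ck_comp (image D v) _ (minv m) Ho HM n (fun z => snd (g z)) (Hg2 n)).
    + intros x Dx. simpl. rewrite minv_mulv by auto. auto.
    + intros y Hy. simpl. rewrite Hvg by (apply HM; auto). apply mulv_minv; auto.
Qed.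
Lemma dpl_loc (f g : R -> R) x l r : 0 < r ->
  (forall t, Rabs (t - x) < r -> g t = f t) ->
  derivable_pt_lim g x l -> derivable_pt_lim f x l.
Proof.
  intros Hr He Hg. apply is_derive_Reals. apply is_derive_Reals in Hg.
  apply (is_derive_ext_loc g f x l); auto.
  exists (mkposreal r Hr). intros t Ht. apply He. exact Ht.
Qed.

Lemma jac_v_inv D v a1 a2 d11 d12 d21 d22 : is_open D -> D (a1,a2) ->
  diffeo_onto_image D v ->
  partial1 (fun y => fst (v y)) (a1,a2) d11 -> partial2 (fun y => fst (v y)) (a1,a2) d12 ->
  partial1 (fun y => snd (v y)) (a1,a2) d21 -> partial2 (fun y => snd (v y)) (a1,a2) d22 ->
  d11 * d22 - d12 * d21 <> 0.
Proof.
  intros HD Da [_ [_ [Ho [g [[Hg1 Hg2] [Hgv _]]]]]] P11 P12 P21 P22.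
  destruct (Hg1 1%nat) as [h1 [h2 [Hh [Hh1 Hh2]]]].
  destruct (Hg2 1%nat) as [k1 [k2 [Hk [Hk1 Hk2]]]].
  simpl in Hh1, Hk1.
  assert (Hv : image D v (v (a1,a2))) by (exists (a1,a2); auto).
  pose proof (C1_diff (image D v) (fun z => fst (g z)) h1 h2 (v (a1,a2)) Ho Hv Hh (Hh1 _ Hv)) as Hd1.
  pose proof (C1_diff (image D v) (fun z => snd (g z)) k1 k2 (v (a1,a2)) Ho Hv Hk (Hk1 _ Hv)) as Hd2.
  unfold partial1, partial2 in P11, P12, P21, P22; simpl in P11, P12, P21, P22.
  destruct (HD _ Da) as [r [Hr Hr']].
  assert (L1 : forall t, Rabs (t - a1) < r -> D (t, a2)).
  { intros t Ht. apply Hr'. unfold dist2sq; simpl.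
    apply Rabs_def2 in Ht. destruct Ht. nra. }
  assert (L2 : forall t, Rabs (t - a2) < r -> D (a1, t)).
  { intros t Ht. apply Hr'. unfold dist2sq; simpl.
    apply Rabs_def2 in Ht. destruct Ht. nra. }
  assert (E1 : h1 (v (a1,a2)) * d11 + h2 (v (a1,a2)) * d21 = 1).
  { eapply uniqueness_limite.
    - exact (derivable_pt_lim_comp_2d (fun u w => fst (g (u,w))) (fun s => fst (v (s,a2))) (fun s => snd (v (s,a2))) a1 _ _ _ _ Hd1 P11 P21).
    - apply (dpl_loc _ (fun s => s) a1 1 r Hr); [|apply derivable_pt_lim_id].
      intros t Ht. simpl. rewrite <- surjective_pairing, Hgv; auto. }
  assert (E2 : h1 (v (a1,a2)) * d12 + h2 (v (a1,a2)) * d22 = 0).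
  { eapply uniqueness_limite.
    - exact (derivable_pt_lim_comp_2d (fun u w => fst (g (u,w))) (fun s => fst (v (a1,s))) (fun s => snd (v (a1,s))) a2 _ _ _ _ Hd1 P12 P22).
    - apply (dpl_loc _ (fun s => a1) a2 0 r Hr); [|apply derivable_pt_lim_const].
      intros t Ht. simpl. rewrite <- surjective_pairing, Hgv; auto. }
  assert (E3 : k1 (v (a1,a2)) * d11 + k2 (v (a1,a2)) * d21 = 0).
  { eapply uniqueness_limite.
    - exact (derivable_pt_lim_comp_2d (fun u w => snd (g (u,w))) (fun s => fst (v (s,a2))) (fun s => snd (v (s,a2))) a1 _ _ _ _ Hd2 P11 P21).
    - apply (dpl_loc _ (fun s => a2) a1 0 r Hr); [|apply derivable_pt_lim_const].
      intros t Ht. simpl. rewrite <- surjective_pairing, Hgv; auto. }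
  assert (E4 : k1 (v (a1,a2)) * d12 + k2 (v (a1,a2)) * d22 = 1).
  { eapply uniqueness_limite.
    - exact (derivable_pt_lim_comp_2d (fun u w => snd (g (u,w))) (fun s => fst (v (a1,s))) (fun s => snd (v (a1,s))) a2 _ _ _ _ Hd2 P12 P22).
    - apply (dpl_loc _ (fun s => s) a2 1 r Hr); [|apply derivable_pt_lim_id].
      intros t Ht. simpl. rewrite <- surjective_pairing, Hgv; auto. }
  intro H0.
  set (x1 := h1 (v (a1,a2))) in *; set (x2 := h2 (v (a1,a2))) in *;
  set (y1 := k1 (v (a1,a2))) in *; set (y2 := k2 (v (a1,a2))) in *.
  assert (Ep : (x1 * y2 - x2 * y1) * (d11 * d22 - d12 * d21) =
     (x1*d11 + x2*d21) * (y1*d12 + y2*d22) - (x1*d12 + x2*d22) * (y1*d11 + y2*d21)) by ring.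
  rewrite H0, E1, E2, E3, E4 in Ep. lra.
Qed.
Lemma deriv_on_lin2 I (f g : R -> R) t lf lg a b :
  deriv_on I f t lf -> deriv_on I g t lg ->
  deriv_on I (fun s => f s * a + g s * b) t (lf * a + lg * b).
Proof.
  intros Hf Hg.
  replace (fun s => f s * a + g s * b) with (fun s => a * f s + b * g s)
    by (apply functional_extensionality; intro; ring).
  replace (lf * a + lg * b) with (a * lf + b * lg) by ring.
  apply deriv_on_lin; auto.
Qed.

Lemma dpl_sq (f g : R -> R) x lf lg c :
  derivable_pt_lim f x lf -> derivable_pt_lim g x lg ->
  derivable_pt_lim (fun s => c * (f s * f s + g s * g s)) x (c * (2 * f x * lf + 2 * g x * lg)).
Proof.
  intros Hf Hg.
  pose proof (derivable_pt_lim_scal _ c x _ (derivable_pt_lim_plus _ _ x _ _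
     (derivable_pt_lim_mult f f x lf lf Hf Hf) (derivable_pt_lim_mult g g x lg lg Hg Hg))) as H.
  replace (c * (2 * f x * lf + 2 * g x * lg)) with
    (c * (lf * f x + f x * lf + (lg * g x + g x * lg))) by ring.
  exact H.
Qed.

Lemma euler_alg (b11 b12 b21 b22 c11 c12 c21 c22 d11 d12 d21 d22 v1 v2 : R) :
  c12*b11 + c22*b21 = 0 -> c11*b12 + c21*b22 = 0 ->
  c11*b11 - c12*b12 + c21*b21 - c22*b22 = 0 ->
  (b11*d11 + b12*d21) * (c11*v1 + c12*v2) + (b21*d11 + b22*d21)*(c21*v1 + c22*v2)
   + (- (c11*b11 + c21*b21) / 2 * (2*v1*d11 + 2*v2*d21)) = 0 /\
  (b11*d12 + b12*d22) * (c11*v1 + c12*v2) + (b21*d12 + b22*d22)*(c21*v1 + c22*v2)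
   + (- (c11*b11 + c21*b21) / 2 * (2*v1*d12 + 2*v2*d22)) = 0.
Proof.
  intros X1 X2 X3. split.
  - assert (E : (b11*d11 + b12*d21) * (c11*v1 + c12*v2) + (b21*d11 + b22*d21)*(c21*v1 + c22*v2)
      + (- (c11*b11 + c21*b21) / 2 * (2*v1*d11 + 2*v2*d21)) =
      d11*v2*(c12*b11 + c22*b21) + d21*v1*(c11*b12 + c21*b22) - d21*v2*(c11*b11 - c12*b12 + c21*b21 - c22*b22)) by field.
    rewrite E, X1, X2, X3; ring.
  - assert (E : (b11*d12 + b12*d22) * (c11*v1 + c12*v2) + (b21*d12 + b22*d22)*(c21*v1 + c22*v2)
      + (- (c11*b11 + c21*b21) / 2 * (2*v1*d12 + 2*v2*d22)) =
      d12*v2*(c12*b11 + c22*b21) + d22*v1*(c11*b12 + c21*b22) - d22*v2*(c11*b11 - c12*b12 + c21*b21 - c22*b22)) by field.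
    rewrite E, X1, X2, X3; ring.
Qed.

Definition Jof (M : M2) (d11 d12 d21 d22 : R) : M2 :=
  mkM2 (a11 M * d11 + a12 M * d21) (a11 M * d12 + a12 M * d22)
       (a21 M * d11 + a22 M * d21) (a21 M * d12 + a22 M * d22).

Lemma jac_lin (v : R2 -> R2) M x d11 d12 d21 d22 :
  partial1 (fun y => fst (v y)) x d11 -> partial2 (fun y => fst (v y)) x d12 ->
  partial1 (fun y => snd (v y)) x d21 -> partial2 (fun y => snd (v y)) x d22 ->
  jac (fun y => mulv M (v y)) x (Jof M d11 d12 d21 d22).
Proof.
  unfold partial1, partial2, jac, Jof, mulv; simpl; intros P11 P12 P21 P22.
  repeat split; apply dpl_lin; auto.
Qed.

Theorem theorem4p3 (D : R2 -> Prop) (v : R2 -> R2) (A : R -> M2) :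
  domain D -> diffeo_onto_image D v -> geodesic_SL2 A ->
  lagrangian_euler D (fun t alpha => mulv (A t) (v alpha)).
Proof.
  intros [_ [HD _]] Hv [HSL [A1 [A2 HA]]].
  destruct Hv as [[Hs1 Hs2] Hrest] eqn:Hveq.
  destruct (Hs1 1%nat) as [p1 [p2 [Hp _]]].
  destruct (Hs2 1%nat) as [q1 [q2 [Hq _]]].
  split; [|split].
  - intros t Ht. apply diffeo_lin; auto. apply HSL; auto.
  - intros t [a1 a2] Ht Da.
    destruct (Hp _ Da) as [P11 P12]; destruct (Hq _ Da) as [P21 P22].
    exists (Jof (A t) (p1 (a1,a2)) (p2 (a1,a2)) (q1 (a1,a2)) (q2 (a1,a2))),
           (Jof (A 0) (p1 (a1,a2)) (p2 (a1,a2)) (q1 (a1,a2)) (q2 (a1,a2))).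
    split; [apply jac_lin; auto|]. split; [apply jac_lin; auto|].
    pose proof (HSL t Ht) as H1. pose proof (HSL 0 (Rle_refl 0)) as H0.
    unfold InSL2, det in H1, H0.
    pose proof (jac_v_inv D v a1 a2 _ _ _ _ HD Da Hv P11 P12 P21 P22) as Hnz.
    unfold det, Jof; simpl.
    set (e := p1 (a1,a2) * q2 (a1,a2) - p2 (a1,a2) * q1 (a1,a2)) in *.
    assert (Et : forall M, (a11 M * p1 (a1, a2) + a12 M * q1 (a1, a2)) * (a21 M * p2 (a1, a2) + a22 M * q2 (a1, a2)) -
      (a11 M * p2 (a1, a2) + a12 M * q2 (a1, a2)) * (a21 M * p1 (a1, a2) + a22 M * q1 (a1, a2))
      = (a11 M * a22 M - a12 M * a21 M) * e) by (intro M; unfold e; ring).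
    rewrite !Et, H1, H0. split; [ring|]. rewrite Rmult_1_l; exact Hnz.
  - set (lam := fun t => a11 (A2 t) * a11 (A t) + a21 (A2 t) * a21 (A t)).
    exists (fun t z => - lam t / 2 * (fst (v z) * fst (v z) + snd (v z) * snd (v z))),
           (fun t z => mulv (A1 t) (v z)), (fun t z => mulv (A2 t) (v z)).
    intros t [a1 a2] Ht Da.
    destruct (HA t Ht) as [[D11 [D12 [D21 D22]]] [[E11 [E12 [E21 E22]]] HN]].
    destruct (Hp _ Da) as [P11 P12]; destruct (Hq _ Da) as [P21 P22].
    split; [apply (deriv_on_lin2 _ (fun s => a11 (A s)) (fun s => a12 (A s))); auto|].
    split; [apply (deriv_on_lin2 _ (fun s => a21 (A s)) (fun s => a22 (A s))); auto|].
    split; [apply (deriv_on_lin2 _ (fun s => a11 (A1 s)) (fun s => a12 (A1 s))); auto|].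
    split; [apply (deriv_on_lin2 _ (fun s => a21 (A1 s)) (fun s => a22 (A1 s))); auto|].
    set (B := A t) in *. set (C := A2 t) in *.
    assert (X1 : a12 C * a11 B + a22 C * a21 B = 0).
    { pose proof (HN (mkM2 0 (a11 B) 0 (a21 B))) as H. unfold frob in H; simpl in H.
      rewrite <- H; [ring|]. unfold TangentSL2, ddet; simpl; ring. }
    assert (X2 : a11 C * a12 B + a21 C * a22 B = 0).
    { pose proof (HN (mkM2 (a12 B) 0 (a22 B) 0)) as H. unfold frob in H; simpl in H.
      rewrite <- H; [ring|]. unfold TangentSL2, ddet; simpl; ring. }
    assert (X3 : a11 C * a11 B - a12 C * a12 B + a21 C * a21 B - a22 C * a22 B = 0).
    { pose proof (HN (mkM2 (a11 B) (- a12 B) (a21 B) (- a22 B))) as H. unfold frob in H; simpl in H.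
      rewrite <- H; [ring|]. unfold TangentSL2, ddet; simpl; ring. }
    destruct (euler_alg (a11 B) (a12 B) (a21 B) (a22 B) (a11 C) (a12 C) (a21 C) (a22 C)
      (p1 (a1,a2)) (p2 (a1,a2)) (q1 (a1,a2)) (q2 (a1,a2)) (fst (v (a1,a2))) (snd (v (a1,a2))) X1 X2 X3)
      as [Q1 Q2].
    exists (Jof B (p1 (a1,a2)) (p2 (a1,a2)) (q1 (a1,a2)) (q2 (a1,a2))),
      (- (a11 C * a11 B + a21 C * a21 B) / 2 * (2 * fst (v (a1,a2)) * p1 (a1,a2) + 2 * snd (v (a1,a2)) * q1 (a1,a2))),
      (- (a11 C * a11 B + a21 C * a21 B) / 2 * (2 * fst (v (a1,a2)) * p2 (a1,a2) + 2 * snd (v (a1,a2)) * q2 (a1,a2))).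
    split; [apply jac_lin; auto|].
    split; [unfold partial1 in *; simpl in *; apply (dpl_sq (fun s => fst (v (s, a2))) (fun s => snd (v (s, a2)))); auto|].
    split; [unfold partial2 in *; simpl in *; apply (dpl_sq (fun s => fst (v (a1, s))) (fun s => snd (v (a1, s)))); auto|].
    unfold Jof, mulv; simpl. split; [exact Q1 | exact Q2].
Qed.
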